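(* Let $R$ be the holistic system robustness random variable (defined in the context), with distribution $\pi_R$, so that $\mathbb{P}_{\pi_R}[-R\le a]=1$. Let $\epsilon\in(0,1)$, $\gamma\in[0,1)$, $\alpha\in(0,1]$, and define \[ L(x,\mu,t)=t\left(\mu+\frac{1}{\alpha}\max\left\{\frac{x}{t}-\mu,0\right\}\right),\qquad u_b(\mu,t)=L(a,\mu,t). \] Let $r_1,\dots,r_N$ be independent samples of $R$ with $N\ge\frac{\log(1-\gamma)}{\log(1-\epsilon)}$, and $\zeta^*_N(\mu,t)=\max_{1\le k\le N}L(-r_k,\mu,t)$. Then \[ \mathbb{P}^N_{\pi_R}\left[r^*_C\triangleq\inf_{\mu\in\mathbb{R},\ t>0}\zeta^*_N(\mu,t)(1-\epsilon)+u_b(\mu,t)\epsilon\ \ge\ \mathrm{CVaR}_\alpha(-R)\right]\ge\gamma. \]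
   Context: System setting: $\dot x = f(x,u)+\xi$, $x\in\mathcal{X}\subset\mathbb{R}^n$, $u=U(x,\theta)\in\mathcal{U}\subset\mathbb{R}^m$, $\theta\in\Theta\subset\mathbb{R}^p$ a parameter fixed along a trajectory, and $\xi$ stochastic noise with unknown distribution $\pi_\xi(x,u,t)$. $x^\theta$ denotes the resulting closed-loop state signal in $\mathcal{S}=\{s:\mathbb{R}_{\ge0}\to\mathbb{R}^n\}$ from an initial condition $x_0\in\mathcal{X}_0\subseteq\mathcal{X}$. A robustness metric is a function $\rho:\mathcal{S}\to[-a,b]$ with $a,b>0$ such that $\rho(s)\ge0$ only for signals exhibiting desired properties. The holistic system robustness $R$ is the scalar random variable whose samples are $r=\rho(x^\theta)$, where $(x_0,\theta)$ is sampled uniformly from $\mathcal{X}_0\times\Theta$. $\mathrm{CVaR}_\alpha(Z)=\inf_{z\in\mathbb{R}} z+\frac{\mathbb{E}[\max(Z-z,0)]}{\alpha}$. $\zeta^*_N(\mu,t)$ is the solution of $\min_\zeta\zeta$ s.t. $\zeta\ge L(-r_i,\mu,t)$ for all $i$; $\mathbb{P}^N_{\pi_R}$ is the $N$-fold product measure of the i.i.d. sample. *)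

(* Defs.v *)
From HB Require Import structures.
From mathcomp Require Import all_boot all_order all_algebra.
From mathcomp Require Import all_classical all_reals all_analysis.
Set Implicit Arguments. Unset Strict Implicit. Unset Printing Implicit Defensive.
Import Order.TTheory GRing.Theory Num.Theory.
Local Open Scope classical_set_scope.
Local Open Scope ring_scope.

Definition Lfun {R : realType} (alpha x mu t : R) : R :=
  t * (mu + alpha^-1 * Num.max (x / t - mu) 0).

Definition CVaR {d} {T : measurableType d} {R : realType}
  (alpha : R) (P : probability T R) (Z : T -> R) : \bar R :=
  ereal_inf [set (z%:E + (\int[P]_w (Num.max (Z w - z) 0)%:E) * (alpha^-1)%:E)%E
            | z in [set: R]].

(* zeta*_N(mu,t) = min { zeta | zeta >= L(-r_i, mu, t) for all i }
   = max_k L(-r_k, mu, t)  (-oo if there is no sample). *)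
Definition zeta_star {R : realType} (N : nat) (alpha : R) (r : 'I_N -> R) (mu t : R)
  : \bar R :=
  \big[Order.max/-oo%E]_(k < N) (Lfun alpha (- r k) mu t)%:E.

Definition rC_star {R : realType} (N : nat) (alpha eps a : R) (r : 'I_N -> R) : \bar R :=
  ereal_inf [set e : \bar R | exists mu t : R, 0 < t /\
               e = (zeta_star alpha r mu t * (1 - eps)%:E
                    + (Lfun alpha a mu t * eps)%:E)%E].

Definition iid_sample {d} {Omega : measurableType d} {R : realType} (N : nat)
  (Q : probability Omega R) (pi : probability R R) (r : 'I_N -> Omega -> R) : Prop :=
  [/\ (forall i, measurable_fun [set: Omega] (r i)),
      (forall i (B : set R), measurable B -> Q (r i @^-1` B) = pi B) &
      (forall B : 'I_N -> set R, (forall i, measurable (B i)) ->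
         Q [set w | forall i, B i (r i w)] = (\prod_(i < N) Q (r i @^-1` B i))%E)].

(* Main.v *)
Require Import Defs.
From HB Require Import structures.
From mathcomp Require Import all_boot all_order all_algebra.
From mathcomp Require Import all_classical all_reals all_analysis.
From mathcomp Require Import ring lra.
Import Order.TTheory GRing.Theory Num.Theory.
Local Open Scope classical_set_scope.
Local Open Scope ring_scope.
Import measurable_realfun.
Section S.
Variable R : realType.

Lemma LfunE (alpha x mu t : R) : 0 < t ->
  Defs.Lfun alpha x mu t = t * mu + alpha^-1 * Num.max (x - t * mu) 0.
Proof.
move=> t0; rewrite /Defs.Lfun mulrDr; congr (_ + _).
rewrite mulrCA maxr_pMr ?ltW // mulr0 mulrBr mulrCA mulfV ?gt_eqF // mulr1.
by [].
Qed.

Lemma Lmono (alpha x y mu t : R) : 0 < alpha -> 0 < t -> x <= y ->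
  Defs.Lfun alpha x mu t <= Defs.Lfun alpha y mu t.
Proof.
move=> a0 t0 xy; rewrite !LfunE // lerD2l; apply: ler_wpM2l; first by rewrite invr_ge0 ltW.
by rewrite ge_max !le_max lexx !orbT lerD2r xy.
Qed.

Definition Hf (alpha eps a x : R) : \bar R :=
  ereal_inf [set e : \bar R | exists mu t : R, 0 < t /\
               e = ((Defs.Lfun alpha x mu t)%:E * (1 - eps)%:E
                    + (Defs.Lfun alpha a mu t * eps)%:E)%E].

Lemma Hmono (alpha eps a x y : R) : 0 < alpha -> eps <= 1 -> x <= y ->
  (Hf alpha eps a x <= Hf alpha eps a y)%E.
Proof.
move=> a0 e1 xy; apply: le_ereal_inf_tmp => e [mu [t [t0 ->]]].
apply: le_trans (ereal_inf_lbound _) _; first by exists mu, t; split.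
rewrite leeD2r // lee_wpmul2r ?lee_fin ?subr_ge0 //; exact: Lmono.
Qed.

Lemma zeta_eq n (alpha mu t : R) (r : 'I_n -> R) k0 :
  (forall k, - r k <= - r k0) -> 0 < alpha -> 0 < t ->
  zeta_star alpha r mu t = (Defs.Lfun alpha (- r k0) mu t)%:E.
Proof.
move=> hk a0 t0; apply/le_anti/andP; split.
  apply: bigmax_le => [|i _]; first exact: leNye.
  rewrite lee_fin; exact: Lmono.
exact: (le_bigmax _ (fun k => (Defs.Lfun alpha (- r k) mu t)%:E) k0).
Qed.

Lemma rC_eq n (alpha eps a : R) (r : 'I_n -> R) k0 :
  (forall k, - r k <= - r k0) -> 0 < alpha ->
  rC_star alpha eps a r = Hf alpha eps a (- r k0).
Proof.
move=> hk a0; rewrite /rC_star /Hf; congr ereal_inf.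
apply: funext => e; apply: propext; split => -[mu [t [t0 ->]]];
  exists mu, t; split => //; by rewrite (@zeta_eq _ alpha mu t r k0 hk a0 t0).
Qed.

Lemma mS1 (c : R) : measurable [set v : R | c < - v].
Proof.
have -> : [set v : R | c < - v] = `]-oo, - c[%classic.
  by apply/seteqP; split => v /=; rewrite in_itv /= ltrNr.
exact: measurable_itv.
Qed.

Lemma mS2 (c : R) : measurable [set v : R | - v <= c].
Proof.
have -> : [set v : R | - v <= c] = `[- c, +oo[%classic.
  by apply/seteqP; split => v /=; rewrite in_itv /= andbT lerNl.
exact: measurable_itv.
Qed.

Lemma mS3 (c : R) : measurable [set v : R | c <= v].
Proof.
have -> : [set v : R | c <= v] = `[c, +oo[%classic.
  by apply/seteqP; split => v /=; rewrite in_itv /= andbT.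
exact: measurable_itv.
Qed.

Lemma mS4 (c : R) : measurable [set v : R | c < v].
Proof.
have -> : [set v : R | c < v] = `]c, +oo[%classic.
  by apply/seteqP; split => v /=; rewrite in_itv /= andbT.
exact: measurable_itv.
Qed.

Lemma key (pi : probability R R) (a alpha eps x : R) : 0 < alpha -> 0 <= eps <= 1 ->
  pi [set y : R | - y <= a] = 1%E -> (pi [set y : R | (x < - y)%R] <= eps%:E)%E ->
  (CVaR alpha pi (fun y : R => (- y)%R) <= Hf alpha eps a x)%E.
Proof.
move=> a0 /andP[e0 e1] hsupp hx.
have pa0 : pi [set y : R | a < - y] = 0%E.
  have -> : [set y : R | a < - y] = ~` [set y | - y <= a].
    apply/seteqP; split => y /=; rewrite ltNge.
      by move/negP.
    by move=> h; apply/negP.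
  by rewrite probability_setC ?hsupp ?subee //; exact: mS2.
have [b [hbx [hba hb]]] : exists b, b <= x /\ b <= a /\ (pi [set y : R | (b < - y)%R] <= eps%:E)%E.
  case: (leP x a) => xa.
    by exists x; split => //; split.
  by exists a; split; [exact: ltW | split => //; rewrite pa0 lee_fin].
apply: le_ereal_inf_tmp => e [mu [t [t0 ->]]].
set z := t * mu.
apply: (@le_trans _ _ (z%:E + (\int[pi]_w (Num.max (- w - z) 0)%:E) * (alpha^-1)%:E)%E).
  by apply: ereal_inf_lbound; exists z.
set gb := Num.max (b - z) 0. set ga := Num.max (a - z) 0. set gx := Num.max (x - z) 0.
have gbga : gb <= ga by rewrite ge_max !le_max lexx !orbT lerD2r hba.
have gbgx : gb <= gx by rewrite ge_max !le_max lexx !orbT lerD2r hbx.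
have gb0 : 0 <= gb by rewrite le_max lexx orbT.
set S := [set y : R | b < - y].
have mS : measurable S by exact: mS1.
have Sfin : pi S \is a fin_num by exact: fin_num_measure.
set q := fine (pi S).
have q0 : 0 <= q by rewrite fine_ge0.
have qe : q <= eps by rewrite -lee_fin /q fineK.
have hI : (\int[pi]_w (Num.max (- w - z) 0)%:E <= (gb + (ga - gb) * q)%:E)%E.
  apply: (@le_trans _ _ (\int[pi]_w (gb + (ga - gb) * \1_S w)%:E)%E).
    apply: ae_ge0_le_integral => //.
    - by move=> w _; rewrite lee_fin le_max lexx orbT.
    - apply/measurable_realfun.measurable_EFinP; apply: measurable_maxr => //.
      by apply: measurable_funB => //; apply: measurable_funN.
    - move=> w _; rewrite lee_fin indicE; case: (w \in S) => /=.
        by rewrite mulr1 addrC subrK (le_trans gb0).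
      by rewrite mulr0 addr0.
    - apply/measurable_realfun.measurable_EFinP; apply: measurable_funD => //.
      by apply: measurable_funM => //; exact: measurable_indic.
    - exists [set y | a < - y]; split => //; first exact: mS1.
      move=> w /= hw; rewrite ltNge; apply/negP => wa; apply: hw => _.
      rewrite lee_fin indicE; case: (boolP (w \in S)) => wS /=.
        rewrite mulr1 subrKC /ga ge_max !le_max lexx !orbT andbT.
        by rewrite lerD2r wa.
      rewrite mulr0 addr0 /gb ge_max !le_max lexx !orbT andbT lerD2r.
      by move: wS; rewrite /S notin_setE /= => /negP; rewrite -leNgt => ->.
  rewrite (eq_integral (fun w => gb%:E + (ga - gb)%:E * (\1_S w)%:E)%E); last first.
    by move=> w _; rewrite EFinD EFinM.
  rewrite ge0_integralD //.
  - rewrite integral_cst //.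
    set P1 := (X in (gb%:E * X)%E).
    have -> : P1 = 1%E by exact: probability_setT.
    rewrite mule1.
    rewrite ge0_integralZl_EFin //; last by rewrite subr_ge0.
    + rewrite integral_indic // setIT.
      set P2 := (X in ((ga - gb)%:E * X)%E).
      have -> : P2 = q%:E by rewrite /P2 /q fineK.
      by rewrite -EFinM -EFinD.
    + by apply/measurable_realfun.measurable_EFinP; exact: measurable_indic.
  - by move=> w _; rewrite mule_ge0 ?lee_fin ?subr_ge0 // indicE; case: (w \in S).
  - by apply: measurable_funeM; apply/measurable_realfun.measurable_EFinP; exact: measurable_indic.
have If : (\int[pi]_w (Num.max (- w - z) 0)%:E)%E \is a fin_num.
  rewrite ge0_fin_numE; first by apply: (le_lt_trans hI); exact: ltry.
  by apply: integral_ge0 => w _; rewrite lee_fin le_max lexx orbT.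
rewrite -(fineK If) -!EFinM -!EFinD lee_fin !LfunE // -/z -/gx -/ga.
move: hI; rewrite -(fineK If) lee_fin; set iI := fine _ => hI.
have hK : iI <= (1 - eps) * gx + eps * ga.
  have h1 : 0 <= (ga - gb) * (eps - q) by rewrite mulr_ge0 // subr_ge0.
  have h2 : 0 <= (1 - eps) * (gx - gb) by rewrite mulr_ge0 // subr_ge0.
  nra.
have -> : (z + alpha^-1 * gx) * (1 - eps) + (z + alpha^-1 * ga) * eps =
  z + alpha^-1 * ((1 - eps) * gx + eps * ga) by ring.
rewrite lerD2l mulrC; apply: ler_wpM2l => //; by rewrite invr_ge0 ltW.
Qed.

Lemma pa0 (pi : probability R R) (a : R) : pi [set y : R | - y <= a] = 1%E ->
  pi [set y : R | a < - y] = 0%E.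
Proof.
move=> hsupp.
have -> : [set y : R | a < - y] = ~` [set y | - y <= a].
  apply/seteqP; split => y /=; rewrite ltNge.
    by move/negP.
  by move=> h; apply/negP.
by rewrite probability_setC ?hsupp ?subee //; exact: mS2.
Qed.
End S.

Theorem corollary7 (R : realType) (pi : probability R R) (a : R)
  (ha : 0 < a)
  (hsupp : pi [set x : R | - x <= a] = 1%E)
  (eps gamma alpha : R)
  (heps : 0 < eps < 1) (hgamma : 0 <= gamma < 1) (halpha : 0 < alpha <= 1)
  (N : nat) (hN : ln (1 - gamma) / ln (1 - eps) <= N%:R)
  (d : measure_display) (Omega : measurableType d) (Q : probability Omega R)
  (r : 'I_N -> Omega -> R) (hr : iid_sample Q pi r) :
  (gamma%:E <= Q [set w | CVaR alpha pi (fun x : R => (- x)%R)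
                           <= rC_star alpha eps a (fun k => r k w)])%E.
Proof.
case/andP: heps => e0 e1; case/andP: hgamma => g0 g1; case/andP: halpha => a0 a1.
have [->|gne] := eqVneq gamma 0; first exact: measure_ge0.
have gpos : 0 < gamma by rewrite lt_def gne g0.
have hpow : (1 - eps) ^+ N <= 1 - gamma.
  have l0 : ln (1 - eps) < 0 by apply: ln_lt0; apply/andP; split; lra.
  rewrite -ler_ln ?posrE ?exprn_gt0 ?subr_gt0 // lnXn ?subr_gt0 // -mulr_natl.
  by move: hN; rewrite ler_ndivrMr.
have Npos : (0 < N)%N.
  rewrite lt0n; apply/negP => /eqP N0; move: hpow; rewrite N0 expr0 => h; lra.
case: hr => hr1 hr2 hr3.
set C := CVaR alpha pi (fun x : R => (- x)%R).
pose B := [set y : R | ~~ (C <= @Hf R alpha eps a (- y))%E].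
have Bup y y' : B y -> y <= y' -> B y'.
  move=> By yy'; apply/negP => h; move/negP: By; apply; apply: le_trans h _.
  by apply: Hmono => //; [exact: ltW | rewrite lerN2].
have Bbnd y : B y -> - a < y.
  move=> By; rewrite ltNge; apply/negP => ya; move/negP: By; apply.
  apply: key => //; first by apply/andP; split; apply: ltW.
  apply: (@le_trans _ _ (pi [set v : R | a < - v])).
    rewrite le_measure ?inE //; [exact: mS1 | exact: mS1 |].
    by move=> v /= h; apply: le_lt_trans h; rewrite lerNr.
  by rewrite (@pa0 _ _ _ hsupp) lee_fin ltW.
have Bprob y : B y -> (pi [set v : R | (y <= v)%R] < (1 - eps)%:E)%E.
  move=> By.
  have mA : measurable [set v : R | - y < - v] by exact: mS1.
  have hA : (eps%:E < pi [set v : R | (- y < - v)%R])%E.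
    rewrite ltNge; apply/negP => h; move/negP: By; apply.
    by apply: key => //; apply/andP; split; apply: ltW.
  have -> : [set v : R | y <= v] = ~` [set v : R | - y < - v].
    apply/seteqP; split => v /=; rewrite ltrN2 leNgt.
      by move/negP.
    by move=> h; apply/negP.
  rewrite probability_setC //.
  have Af : pi [set v : R | - y < - v] \is a fin_num by exact: fin_num_measure.
  move: hA; rewrite -(fineK Af) -EFinB !lte_fin => hA; lra.
have [mB pB] : measurable B /\ (pi B <= (1 - eps)%:E)%E.
  case: (pselect (exists y, B y)) => [[y0 By0]|nB]; last first.
    have -> : B = set0 by apply/seteqP; split => y // By; apply: nB; exists y.
    by rewrite measure0 lee_fin subr_ge0 ltW.
  have hlb : has_lbound B by exists (- a) => y /Bbnd /ltW.
  set s := inf B.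
  case: (pselect (B s)) => Bs.
    have -> : B = [set v : R | s <= v].
      apply/seteqP; split => v /=; first exact: ge_inf.
      exact: Bup.
    by split; [exact: mS3 | apply: ltW; exact: Bprob].
  pose F := fun n : nat => [set v : R | s + n.+1%:R^-1 <= v].
  have BF : forall n, B (s + n.+1%:R^-1).
    move=> n; have [b Bb bs] := @inf_adherent _ B (n.+1%:R^-1) ltac:(by []) (conj (ex_intro _ y0 By0) hlb).
    by apply: Bup Bb _; rewrite ltW.
  have -> : B = \bigcup_n F n.
    apply/seteqP; split => v /=.
      move=> Bv; have sv : s <= v by exact: ge_inf.
      have sv' : s < v by rewrite lt_def sv andbT; apply/eqP => vs; apply: Bs; rewrite -vs.
      have [k hk] := ltr_add_invr sv'.
      by exists k => //; rewrite /F /= ltW.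
    by move=> [n _ hn]; apply: Bup (BF n) hn.
  have mF n : measurable (F n) by exact: mS3.
  have mU : measurable (\bigcup_n F n) by exact: bigcupT_measurable.
  split => //.
  have Fnd : {homo F : n m / (n <= m)%N >-> (n <= m)%O}.
    move=> n m nm; apply/subsetPset => v /=; apply: le_trans; rewrite lerD2l.
    by rewrite lef_pV2 ?posrE // ler_nat.
  have h := nondecreasing_cvg_mu (mu := pi) mF mU Fnd.
  rewrite -(cvg_lim _ h) //; apply: lime_le; first by apply/cvg_ex; eexists; exact: h.
  by apply: nearW => n /=; apply: ltW; apply: Bprob.
pose G := [set w | forall i, B (r i w)].
have hE : [set w | (C <= rC_star alpha eps a (fun k => r k w))%E] = ~` G.
  apply/seteqP; split => w /=;
  case: (@arg_maxP _ _ _ (Ordinal Npos) xpredT (fun i => - r i w) erefl) => k0 _ hk0;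
  rewrite (@rC_eq _ _ alpha eps a (fun k => r k w) k0 (fun k => hk0 k erefl) a0).
    by move=> h hall; move/negP: (hall k0); apply.
  move=> h; apply: contra_notP h => nC i.
  apply/negP => Ci; apply: nC; apply: le_trans Ci _.
  by apply: Hmono => //; [exact: ltW | exact: hk0].
have mG : measurable G.
  have -> : G = \bigcap_(i in [set: 'I_N]) (r i @^-1` B).
    by apply/seteqP; split => w /=; [move=> h i _; exact: h | move=> h i; exact: h].
  apply: fin_bigcap_measurable; first exact: finite_finset.
  by move=> i _; rewrite -[_ @^-1` _]setTI; apply: hr1.
rewrite hE probability_setC //.
have -> : Q G = (\prod_(i < N) Q (r i @^-1` B))%E by exact: hr3.
have Bf : pi B \is a fin_num by exact: fin_num_measure.
rewrite (eq_bigr (fun _ => (fine (pi B))%:E)); last by move=> i _; rewrite hr2 // fineK.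
rewrite prodEFin prodr_const card_ord -EFinB lee_fin.
have p0 : 0 <= fine (pi B) by rewrite fine_ge0.
have p1 : fine (pi B) <= 1 - eps by rewrite -lee_fin fineK.
have : fine (pi B) ^+ N <= (1 - eps) ^+ N.
  by apply: lerXn2r => //; rewrite nnegrE subr_ge0 ltW.
lra.
Qed.
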